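(* Let $k\ge 0$ and let $A$ be a real symmetric matrix indexed by $\mathcal{F}'_k$. Then there exists an isolate-indifferent, reflection positive graph parameter $f$ with $A_{F,G}=f(FG)$ for all $F,G\in\mathcal{F}'_k$ if and only if for every $m\ge k$ there exists a positive semidefinite matrix $B$ indexed by $\mathcal{F}'_m$ such that $B_{F_1,G_1}=B_{F_2,G_2}$ whenever $F_1G_1\simeq F_2G_2$, and $B_{F^{+m},G^{+m}}=A_{F,G}$ for all $F,G\in\mathcal{F}'_k$.
   Context: All graphs are finite and simple. $\mathcal{F}'_k$ denotes the set of flat $k$-labeled graphs, i.e. graphs on node set $[k]=\{1,\dots,k\}$ with node $i$ labeled $i$. For $F,G\in\mathcal{F}'_k$, $FG$ is the graph on $[k]$ with edge set $E(F)\cup E(G)$. For $F\in\mathcal{F}'_k$ and $m\ge k$, $F^{+m}\in\mathcal{F}'_m$ is obtained by adding isolated nodes $k+1,\dots,m$. For graphs $F,G$, $F\simeq G$ means they become isomorphic after deleting isolated nodes. A graph parameter is a real function on isomorphism types of graphs; it is isolate-indifferent if $f(G)=f(G')$ whenever $G\simeq G'$. A $k$-labeled graph is a graph with $k$ nodes labeled $1,\dots,k$ (other nodes unlabeled); the product of two $k$-labeled graphs is their disjoint union with equally labeled nodes identified and multiple edges merged. $f$ is reflection positive if for every $k$ the matrix indexed by $k$-labeled graphs with entries $f(F_1F_2)$ is positive semidefinite (all finite principal submatrices PSD). *)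

(* Defs.v *)
From mathcomp Require Import all_boot.
From Stdlib Require Import Reals.
Unset Printing Implicit Defensive.

Definition flatgraph (n : nat) :=
  {E : {set {set 'I_n}} | [forall e in E, #|e| == 2]}.

Definition edges {n} (F : flatgraph n) : {set {set 'I_n}} := val F.

Record graph := Graph { gn : nat; gE : flatgraph gn }.

Definition adj (G : graph) (i j : 'I_(gn G)) : bool := [set i; j] \in edges (gE G).

Lemma from_rel_proof n (r : rel 'I_n) :
  [forall e in [set e : {set 'I_n} | [exists i, exists j,
        (i != j) && r i j && (e == [set i; j])]], #|e| == 2].
Proof.
apply/forall_inP => e; rewrite inE => /existsP [i /existsP [j /andP [/andP [ij _] /eqP ->]]].
by rewrite cards2 ij.
Qed.

Definition from_rel {n} (r : rel 'I_n) : flatgraph n :=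
  exist (fun E : {set {set 'I_n}} => [forall e in E, #|e| == 2]) _ (from_rel_proof n r).

Definition iso (G H : graph) : Prop :=
  exists f : 'I_(gn G) -> 'I_(gn H),
    bijective f /\ forall i j, adj H (f i) (f j) = adj G i j.

Definition non_isolated (G : graph) : {set 'I_(gn G)} := [set i | [exists j, adj G i j]].

Definition induced (G : graph) (S : {set 'I_(gn G)}) : graph :=
  Graph _ (from_rel (fun x y : 'I_#|S| => adj G (enum_val x) (enum_val y))).

Definition del_isolated (G : graph) : graph := induced G (non_isolated G).

Definition sim (G H : graph) : Prop := iso (del_isolated G) (del_isolated H).

Definition graph_param (f : graph -> R) : Prop := forall G H, iso G H -> f G = f H.

Definition isolate_indifferent (f : graph -> R) : Prop := forall G H, sim G H -> f G = f H.

Definition nadj (G : graph) (u v : nat) : bool :=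
  [exists i : 'I_(gn G), exists j : 'I_(gn G), (nat_of_ord i == u) && (nat_of_ord j == v) && adj G i j].

(* k-labeled graphs: node i (< k) carries label i+1, the other nodes are unlabeled. *)
Definition klgraph (k : nat) := {G : graph | k <= gn G}.

(* product of k-labeled graphs: disjoint union, equally labeled nodes identified,
   multiple edges merged.  Nodes 0..n1-1 are those of F1; nodes n1..n1+n2-k-1 are the
   unlabeled nodes k..n2-1 of F2. *)
Definition kprod {k} (F1 F2 : klgraph k) : graph :=
  let G1 := val F1 in let G2 := val F2 in
  let n1 := gn G1 in let n2 := gn G2 in
  let m2 := fun u : nat => if u < k then u else if n1 <= u then u - n1 + k else n2 in
  Graph _ (from_rel (fun x y : 'I_(n1 + n2 - k) =>
            nadj G1 x y || nadj G2 (m2 x) (m2 y))).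

Definition psd {T : finType} (M : T -> T -> R) : Prop :=
  (forall i j, M i j = M j i) /\
  forall c : T -> R,
    (0 <= \big[Rplus/0%R]_(i : T) \big[Rplus/0%R]_(j : T) (c i * M i j * c j))%R.

(* reflection positivity: all finite principal submatrices of the connection matrices
   (f(F1 F2)) indexed by k-labeled graphs are PSD, for every k *)
Definition reflection_positive (f : graph -> R) : Prop :=
  forall k n (F : 'I_n -> klgraph k), psd (fun i j => f (kprod (F i) (F j))).

Lemma flat_prod_proof k (F G : flatgraph k) : [forall e in edges F :|: edges G, #|e| == 2].
Proof.
apply/forall_inP => e; rewrite inE => /orP [] He.
  exact: (forall_inP (valP F) e He).
exact: (forall_inP (valP G) e He).
Qed.

Definition flat_prod {k} (F G : flatgraph k) : flatgraph k := exist (fun E : {set {set 'I_k}} => [forall e in E, #|e| == 2]) _ (flat_prod_proof k F G).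

Definition as_graph {k} (F : flatgraph k) : graph := Graph k F.

(* F^{+m}: add isolated nodes k..m-1 *)
Definition pad {k} m (F : flatgraph k) : flatgraph m :=
  from_rel (fun x y : 'I_m => nadj (as_graph F) x y).

(* Main.v *)
Require Import Defs.
From Stdlib Require Import Reals Lra Lia List Classical ClassicalEpsilon.

Module Bis.
Local Open Scope R_scope.

Definition em_inf (P : Prop) : {P} + {~ P}.
Proof.
assert (H : exists b : bool, if b then P else ~ P).
  destruct (classic P) as [p|np]; [exists true; exact p | exists false; exact np].
destruct (constructive_indefinite_description _ H) as [[|] h]; [left|right]; exact h.
Defined.

Section Bis.
Variable vv : nat -> nat -> R.
Variable C : R.
Hypothesis hv : forall m i, 0 <= vv m i <= C.

Definition st := ((nat -> R) * (nat -> R))%type.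
Definition inbox (s : st) m := forall i, fst s i <= vv m i <= snd s i.
Definition Inv (s : st) := forall N, exists m, (N <= m)%nat /\ inbox s m.
Definition upd (f : nat -> R) i x := fun j => if Nat.eq_dec j i then x else f j.
Definition splt i (s : st) : st :=
  let mid := (fst s i + snd s i) / 2 in
  let sl := (fst s, upd (snd s) i mid) in
  if em_inf (Inv sl) then sl else (upd (fst s) i mid, snd s).
Definition wf (s : st) := forall j, fst s j <= snd s j.
Definition width (s : st) j := snd s j - fst s j.
Definition refines (s' s : st) := forall j, fst s j <= fst s' j /\ snd s' j <= snd s j.

Lemma splt_inv i s : Inv s -> Inv (splt i s).
Proof.
intros H. unfold splt. destruct (em_inf _) as [h|h]; [exact h|].
apply not_all_ex_not in h. destruct h as [N0 hN0].
intros N. destruct (H (Nat.max N N0)) as [m [hm hb]].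
exists m. split; [lia|].
intros j. unfold upd; simpl. destruct (Nat.eq_dec j i) as [->|ne].
- split; [|apply hb].
  destruct (Rle_dec (vv m i) ((fst s i + snd s i) / 2)) as [l|l]; [|lra].
  exfalso; apply hN0. exists m; split; [lia|].
  intros j; unfold upd; simpl. destruct (Nat.eq_dec j i) as [->|]; [split; [apply hb| exact l]|apply hb].
- apply hb.
Qed.

Lemma splt_wf i s : wf s -> wf (splt i s).
Proof.
intros w j. unfold splt; destruct (em_inf _); simpl; unfold upd;
destruct (Nat.eq_dec j i) as [->|]; try apply w; specialize (w i); lra.
Qed.

Lemma splt_ref i s : wf s -> refines (splt i s) s.
Proof.
intros w j. unfold splt; destruct (em_inf _); simpl; unfold upd;
destruct (Nat.eq_dec j i) as [->|]; specialize (w i); lra.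
Qed.

Lemma splt_half i s : wf s -> width (splt i s) i <= width s i / 2.
Proof.
intros w. unfold width, splt; destruct (em_inf _); simpl; unfold upd;
destruct (Nat.eq_dec i i) as [_|]; try congruence; specialize (w i); lra.
Qed.

Lemma refines_refl s : refines s s.
Proof. intros j; lra. Qed.
Lemma refines_trans a b c : refines a b -> refines b c -> refines a c.
Proof. intros h1 h2 j; specialize (h1 j); specialize (h2 j); lra. Qed.
Lemma refines_width a b j : wf a -> refines a b -> width a j <= width b j.
Proof. intros w h; unfold width; specialize (h j); lra. Qed.

Definition fsplt (l : list nat) (s : st) := fold_left (fun s i => splt i s) l s.

Lemma fsplt_all l : forall s, wf s -> Inv s ->
  wf (fsplt l s) /\ Inv (fsplt l s) /\ refines (fsplt l s) s /\
  (forall i, In i l -> width (fsplt l s) i <= width s i / 2).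
Proof.
induction l as [|a l IH]; intros s w h; simpl.
- split; [exact w|split; [exact h|split; [apply refines_refl|intros i []]]].
- destruct (IH (splt a s)) as [w' [h' [r' hw']]]; auto using splt_wf, splt_inv.
  split; [exact w'|split; [exact h'|split]].
  + eapply refines_trans; [exact r'|apply splt_ref; exact w].
  + intros i [->|hi].
    * eapply Rle_trans; [apply refines_width; [exact w'|exact r']|apply splt_half; exact w].
    * eapply Rle_trans; [apply hw'; exact hi|].
      pose proof (refines_width _ _ i (splt_wf a s w) (splt_ref a s w)). lra.
Qed.

Definition init : st := (fun _ => 0, fun _ => C).

Fixpoint Sq (r : nat) : st :=
  match r with 0 => init | Datatypes.S r => fsplt (seq 0 (Datatypes.S r)) (Sq r) end.

Lemma S_all r : wf (Sq r) /\ Inv (Sq r).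
Proof.
induction r as [|r [w h]]; simpl.
- split; [intros j; simpl; destruct (hv 0 j); lra|].
  intros N; exists N; split; [lia|]; intros j; simpl; apply hv.
- destruct (fsplt_all (seq 0 (Datatypes.S r)) (Sq r)) as [? [? _]]; auto.
Qed.

Lemma S_ref r : refines (Sq (Datatypes.S r)) (Sq r).
Proof. destruct (S_all r) as [w h]. apply (fsplt_all _ _ w h). Qed.

Lemma S_mono r t : refines (Sq (r + t)) (Sq r).
Proof.
induction t as [|t IH].
- rewrite Nat.add_0_r; apply refines_refl.
- rewrite Nat.add_succ_r. eapply refines_trans; [apply S_ref|exact IH].
Qed.

Lemma S_half i r : (i <= r)%nat -> width (Sq (Datatypes.S r)) i <= width (Sq r) i / 2.
Proof.
intros hi. destruct (S_all r) as [w h].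
apply (fsplt_all _ _ w h). apply in_seq. lia.
Qed.

Lemma width0 r i : width (Sq r) i <= C.
Proof.
pose proof (S_mono 0 r i) as [h1 h2]. simpl in h1, h2.
unfold width. lra.
Qed.

Lemma width_pow i t : width (Sq (i + t)) i <= C / 2 ^ t.
Proof.
induction t as [|t IH].
- simpl. unfold Rdiv; rewrite Rinv_1, Rmult_1_r. apply width0.
- rewrite Nat.add_succ_r. eapply Rle_trans; [apply S_half; lia|].
  simpl. assert (0 < 2 ^ t) by (apply pow_lt; lra).
  replace (C / (2 * 2 ^ t)) with ((C / 2 ^ t) / 2) by (field; lra). lra.
Qed.

Lemma INR_le_pow t : INR t <= 2 ^ t.
Proof.
induction t as [|t IH]; [simpl; lra|].
rewrite S_INR. change (2 ^ Datatypes.S t) with (2 * 2 ^ t). assert (1 <= 2 ^ t) by (apply pow_R1_Rle; lra). lra.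
Qed.

Theorem approx_exists : exists a : nat -> R, forall (L N : nat) (eps : R), 0 < eps ->
  exists m, (N <= m)%nat /\ forall i, (i <= L)%nat -> Rabs (vv m i - a i) <= eps.
Proof.
assert (hb : forall j, bound (fun x => exists r, x = fst (Sq r) j)).
  intros j. exists C. intros x [r ->]. pose proof (S_mono 0 r j). destruct (S_all r) as [w _].
  specialize (w j). simpl in H. lra.
assert (he : forall j, exists x, (fun x => exists r, x = fst (Sq r) j) x).
  intros j; exists (fst (Sq 0) j); exists 0%nat; reflexivity.
exists (fun j => proj1_sig (completeness _ (hb j) (he j))).
intros L N eps heps.
assert (hC : 0 <= C) by (destruct (hv 0 0); lra).
destruct (archimed_cor1 (eps / (C + 1))) as [t [ht tpos]].
  apply Rdiv_lt_0_compat; lra.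
destruct (S_all (L + t)) as [w hinv].
destruct (hinv N) as [m [hm hbox]].
exists m; split; [exact hm|].
intros i hi.
destruct (completeness _ (hb i) (he i)) as [a [hub hlub]]; simpl.
assert (alo : fst (Sq (L + t)) i <= a) by (apply hub; exists (L + t)%nat; reflexivity).
assert (ahi : a <= snd (Sq (L + t)) i).
  { apply hlub. intros x [r ->].
  destruct (Compare_dec.le_lt_dec r (L + t)) as [le|lt].
  - replace (L + t)%nat with (r + (L + t - r))%nat by lia.
    pose proof (S_mono r (L + t - r) i) as [h1 h2]. pose proof (w i).
    replace (r + (L + t - r))%nat with (L + t)%nat in * by lia. lra.
  - replace r with ((L + t) + (r - (L + t)))%nat by lia.
    pose proof (S_mono (L + t) (r - (L + t)) i) as [h1 h2].
    destruct (S_all ((L + t) + (r - (L + t)))) as [w2 _]. pose proof (w2 i). lra. }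
assert (hw : width (Sq (L + t)) i <= eps).
  { replace (L + t)%nat with ((i + t) + (L - i))%nat by lia.
  eapply Rle_trans; [apply refines_width; [apply S_all|apply S_mono]|].
  eapply Rle_trans; [apply width_pow|].
  assert (0 < 2 ^ t) by (apply pow_lt; lra).
  pose proof (INR_le_pow t).
  assert (INR t > 0) by (apply lt_0_INR; lia).
  apply Rmult_lt_compat_r with (r := C + 1) in ht; [|lra].
  replace (eps / (C + 1) * (C + 1)) with eps in ht by (field; lra).
  unfold Rdiv. apply Rle_trans with (C * / INR t).
  + apply Rmult_le_compat_l; [lra|]. apply Rinv_le_contravar; lra.
  + assert (/ INR t * (C + 1) >= C * / INR t).
    { assert (0 < / INR t) by (apply Rinv_0_lt_compat; lra). nra. }
    lra. }
specialize (hbox i). unfold width in hw. apply Rabs_le. lra.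
Qed.
End Bis.

End Bis.

From HB Require Import structures.
From mathcomp Require Import all_boot.
From Stdlib Require Import Reals.
From Stdlib Require Import Lra Lia Classical ClassicalEpsilon.
Unset Printing Implicit Defensive.

HB.instance Definition _ := Monoid.isComLaw.Build R 0%R Rplus (fun a b c => esym (Rplus_assoc a b c)) Rplus_comm Rplus_0_l.


Ltac natify := repeat match goal with
  | H : is_true (_ && _) |- _ => case/andP: H => ? ?
  | H : (_ && _) = false |- _ => move/negbT: H; rewrite negb_and => /orP H
  | H : _ \/ _ |- _ => case: H => H
  | H : is_true (~~ (_ <= _)) |- _ => rewrite -ltnNge in H
  | H : is_true (~~ (_ < _)) |- _ => rewrite -leqNgt in H
  | H : is_true (_ <= _) |- _ => move/leP: H => H
  | H : is_true (_ < _) |- _ => move/ltP: H => H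
  | H : is_true (_ == _) |- _ => move/eqP: H => H
  | H : is_true (~~ (_ == _)) |- _ => move/eqP: H => H
  | H : (_ <= _) = false |- _ => move/negbT: H => H
  | H : (_ < _) = false |- _ => move/negbT: H => H
  | H : (_ <= _) = true |- _ => move/leP: H => H
  | H : (_ && _) = true |- _ => case/andP: H => ? ?
  | H : (_ == _) = true |- _ => move/eqP: H => H
  | H : (_ == _) = false |- _ => move/negbT/eqP: H => H
  | |- (_ < _) = false => apply/negbTE; rewrite -leqNgt
  | |- (_ <= _) = false => apply/negbTE; rewrite -ltnNge
  | |- (_ <= _) = true => apply/leP
  | |- is_true (_ <= _) => apply/leP
  | |- is_true (_ < _) => apply/ltP
  | |- is_true (_ == _) => apply/eqP
  | |- is_true (~~ (_ == _)) => apply/eqP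
  end; unfold addn, subn, muln in *.
Ltac tlia := natify; lia.

Definition psi p M o u := if u < p then u else if (p + o <= u) && (u < p + o + M) then u - o else p + M.
Definition phi p n1 so to u := if u < n1 then (if u < p then u else u + so) else u - n1 + p + to.
Definition eq_junk n x y := (x == y) || (n <= x) && (n <= y).
Definition m2f p n1 n2 u := if u < p then u else if n1 <= u then u - n1 + p else n2.

Ltac junk := rewrite /eq_junk; apply/orP; first [left; tlia | right; apply/andP; split; tlia | exfalso; tlia].

Ltac cases := repeat (case: ifP => ?).

Lemma arA1 p n1 n2 M so to u : p <= n1 -> n1 <= M -> p <= n2 -> n2 <= M ->
  so + M <= to \/ to + M <= so ->
  u < n1 + n2 - p -> eq_junk n1 (psi p M so (phi p n1 so to u)) u.
Proof.
move=> ? ? ? ? ? hu; rewrite /phi; cases; rewrite /psi; cases; junk.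
Qed.

Lemma arA2 p n1 n2 M so to u : p <= n1 -> n1 <= M -> p <= n2 -> n2 <= M ->
  so + M <= to \/ to + M <= so -> u < n1 + n2 - p ->
  eq_junk n2 (psi p M to (phi p n1 so to u)) (m2f p n1 n2 u).
Proof.
move=> ? ? ? ? ? hu; rewrite /phi /m2f; cases; rewrite /psi; cases; junk.
Qed.

Lemma arA3 p n1 n2 M so to m u : p <= n1 -> n1 <= M -> p <= n2 -> n2 <= M ->
  u < n1 + n2 - p -> p + so + M <= m -> p + to + M <= m ->
  phi p n1 so to u < m.
Proof. move=> ? ? ? ? hu hs ht; rewrite /phi; cases; tlia. Qed.

Lemma arA4 p n1 n2 M so to u v : p <= n1 -> n1 <= M -> p <= n2 -> n2 <= M ->
  so + M <= to \/ to + M <= so ->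
  u < n1 + n2 - p -> v < n1 + n2 - p ->
  phi p n1 so to u = phi p n1 so to v -> u = v.
Proof.
move=> ? ? ? ? ? hu hv; rewrite /phi; cases; tlia.
Qed.

Lemma arA5 p n1 n2 M so to a : p <= n1 -> n1 <= M -> p <= n2 -> n2 <= M ->
  psi p M so a < n1 -> exists2 u, u < n1 + n2 - p & phi p n1 so to u = a.
Proof.
move=> ? ? ? ?; rewrite /psi /phi; case: ifP => a1.
  move=> h; exists a; first tlia.
  rewrite ifT; last tlia. by rewrite a1.
case: ifP => a2 h; last tlia.
exists (a - so); first tlia.
rewrite ifT; last tlia. rewrite ifF; last tlia. tlia.
Qed.

Lemma arA6 p n1 n2 M so to a : p <= n1 -> n1 <= M -> p <= n2 -> n2 <= M ->
  psi p M to a < n2 -> exists2 u, u < n1 + n2 - p & phi p n1 so to u = a.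
Proof.
move=> ? ? ? ?; rewrite /psi /phi; case: ifP => a1.
  move=> h; exists a; first tlia.
  rewrite ifT; last tlia. by rewrite a1.
case: ifP => a2 h; last tlia.
exists (a - to - p + n1); first tlia.
rewrite ifF; last tlia. tlia.
Qed.

Lemma edge_card (G : graph) e : e \in edges (gE G) -> #|e| = 2.
Proof. by move=> He; apply/eqP; exact: (forall_inP (valP (gE G)) e He). Qed.
Arguments edge_card {G e}.

Lemma adj_irr (G : graph) x : adj G x x = false.
Proof.
apply/negP => H; have := edge_card H; by rewrite setUid cards1.
Qed.

Lemma adj_sym (G : graph) x y : adj G x y = adj G y x.
Proof. by rewrite /adj setUC. Qed.

Lemma set2_eq (T : finType) (x y i j : T) : i != j -> [set x; y] = [set i; j] ->
  (x = i /\ y = j) \/ (x = j /\ y = i).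
Proof.
move=> ij E.
have hx : x \in [set i; j] by rewrite -E !inE eqxx.
have hy : y \in [set i; j] by rewrite -E !inE eqxx orbT.
have hi : i \in [set x; y] by rewrite E !inE eqxx.
have hj : j \in [set x; y] by rewrite E !inE eqxx orbT.
move: hx hy hi hj; rewrite !inE.
move=> /orP [] /eqP hx /orP [] /eqP hy /orP [] /eqP hi /orP [] /eqP hj; subst;
  rewrite ?eqxx in ij; auto.
Qed.

Lemma adj_from_rel n (r : rel 'I_n) x y :
  adj (Graph n (from_rel r)) x y = (x != y) && (r x y || r y x).
Proof.
rewrite /adj /edges /= inE.
apply/existsP/idP.
- move=> [i /existsP [j /andP [/andP [ij rij] /eqP E]]].
  have [[-> ->]|[-> ->]] := set2_eq _ _ _ _ _ ij E.
  + by rewrite ij rij.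
  + by rewrite eq_sym ij rij orbT.
- case/andP => xy /orP [] rxy.
  + by exists x; apply/existsP; exists y; rewrite xy rxy eqxx.
  + exists y; apply/existsP; exists x; rewrite eq_sym xy rxy setUC eqxx //.
Qed.

Lemma nadj_bound (G : graph) u v : nadj G u v -> (u < gn G) && (v < gn G).
Proof.
by move=> /existsP [i /existsP [j /andP [/andP [/eqP <- /eqP <-] _]]]; rewrite !ltn_ord.
Qed.

Lemma nadjE (G : graph) (a b : 'I_(gn G)) : nadj G a b = adj G a b.
Proof.
apply/existsP/idP.
- move=> [i /existsP [j /andP [/andP [/eqP ia /eqP jb] H]]].
  have -> : a = i by apply/val_inj.
  by have -> : b = j by apply/val_inj.
- by move=> H; exists a; apply/existsP; exists b; rewrite !eqxx H.
Qed.

Lemma nadj_outl (G : graph) u v : gn G <= u -> nadj G u v = false.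
Proof.
move=> h; case e: (nadj G u v) => //; case/andP: (nadj_bound _ _ _ e).
by rewrite ltnNge h.
Qed.
Lemma nadj_outr (G : graph) u v : gn G <= v -> nadj G u v = false.
Proof.
move=> h; case e: (nadj G u v) => //; case/andP: (nadj_bound _ _ _ e).
by move=> _; rewrite ltnNge h.
Qed.

Lemma nadj_sym (G : graph) u v : nadj G u v = nadj G v u.
Proof.
apply/idP/idP => /[dup] /nadj_bound /andP [hu hv].
- by rewrite -[u]/(nat_of_ord (Ordinal hu)) -[v]/(nat_of_ord (Ordinal hv)) !nadjE adj_sym.
- by rewrite -[u]/(nat_of_ord (Ordinal hv)) -[v]/(nat_of_ord (Ordinal hu)) !nadjE adj_sym.
Qed.

Lemma nadj_irr (G : graph) u : nadj G u u = false.
Proof.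
case h: (nadj G u u) => //.
case/andP: (nadj_bound _ _ _ h) => hu _; move: h.
by rewrite -[u]/(nat_of_ord (Ordinal hu)) nadjE adj_irr.
Qed.

Lemma nadj_from_rel n (r : rel 'I_n) (R : nat -> nat -> bool) :
  (forall x y : 'I_n, r x y = R x y) -> forall u v,
  nadj (Graph n (from_rel r)) u v = [&& u < n, v < n, u != v & R u v || R v u].
Proof.
move=> rR u v.
case hu: (u < n); last by rewrite nadj_outl //= leqNgt hu.
case hv: (v < n); last by rewrite nadj_outr //= leqNgt hv.
rewrite -[u]/(nat_of_ord (Ordinal hu)) -[v]/(nat_of_ord (Ordinal hv)) nadjE adj_from_rel.
by rewrite !rR.
Qed.


Lemma nadj_flat_prod k (F G : flatgraph k) u v :
  nadj (as_graph (flat_prod F G)) u v = nadj (as_graph F) u v || nadj (as_graph G) u v.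
Proof.
case: (ltnP u k) => hu; last by rewrite !nadj_outl.
case: (ltnP v k) => hv; last by rewrite !nadj_outr.
rewrite -[u]/(nat_of_ord (Ordinal hu)) -[v]/(nat_of_ord (Ordinal hv)) !nadjE.
by rewrite /adj /= inE.
Qed.


Lemma iso_refl G : iso G G.
Proof. by exists (fun x => x); split => //; exists (fun x => x). Qed.

Lemma iso_sym G H : iso G H -> iso H G.
Proof.
move=> [f [[g fg gf] hadj]]; exists g; split; first by exists f.
by move=> i j; rewrite -hadj !gf.
Qed.

Lemma iso_trans G H K : iso G H -> iso H K -> iso G K.
Proof.
move=> [f [bf hf]] [g [bg hg]]; exists (g \o f); split; first exact: bij_comp.
by move=> i j /=; rewrite hg hf.
Qed.

Lemma sim_sym G H : sim G H -> sim H G.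
Proof. exact: iso_sym. Qed.
Lemma sim_trans G H K : sim G H -> sim H K -> sim G K.
Proof. exact: iso_trans. Qed.
Lemma sim_refl G : sim G G.
Proof. exact: iso_refl. Qed.

Lemma adj_del (G : graph) (x y : 'I_(gn (del_isolated G))) :
  adj (del_isolated G) x y = (x != y) && adj G (enum_val x) (enum_val y).
Proof. by rewrite /del_isolated /induced adj_from_rel adj_sym orbb. Qed.

Lemma sim_crit (G H : graph) (phi : nat -> nat) :
  (forall u v, u < gn G -> v < gn G -> nadj H (phi u) (phi v) = nadj G u v) ->
  (forall u v, u < gn G -> v < gn G -> phi u = phi v -> u = v) ->
  (forall a b, nadj H a b -> exists2 u, u < gn G & phi u = a) ->
  sim G H.
Proof.
move=> hadj hinj hsurj.
pose SG := non_isolated G; pose SH := non_isolated H.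
have ex_f : forall x : 'I_#|SG|, exists y : 'I_#|SH|,
    val (enum_val y) = phi (val (enum_val x)).
  move=> x; have : enum_val x \in SG by exact: enum_valP.
  rewrite inE => /existsP [j hj].
  have hn : nadj H (phi (enum_val x)) (phi j) by rewrite hadj // nadjE.
  case/andP: (nadj_bound _ _ _ hn) => ha hb.
  have hbS : Ordinal ha \in SH.
    rewrite inE; apply/existsP; exists (Ordinal hb); by rewrite -nadjE.
  exists (enum_rank_in hbS (Ordinal ha)).
  by rewrite enum_rankK_in.
have ex_g : forall y : 'I_#|SH|, exists x : 'I_#|SG|,
    phi (val (enum_val x)) = val (enum_val y).
  move=> y; have : enum_val y \in SH by exact: enum_valP.
  rewrite inE => /existsP [j hj].
  have hn : nadj H (enum_val y) j by rewrite nadjE.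
  have [u hu eu] := hsurj _ _ hn.
  have [w hw ew] := hsurj _ _ (etrans (nadj_sym _ _ _) hn).
  have hG : nadj G u w by rewrite -hadj // eu ew.
  have huS : Ordinal hu \in SG.
    rewrite inE; apply/existsP; exists (Ordinal hw); by rewrite -nadjE.
  exists (enum_rank_in huS (Ordinal hu)).
  by rewrite enum_rankK_in.
have [f hf] : exists f : 'I_#|SG| -> 'I_#|SH|, forall x,
    val (enum_val (f x)) = phi (val (enum_val x)).
  by exists (fun x => proj1_sig (constructive_indefinite_description _ (ex_f x)));
    move=> x; case: constructive_indefinite_description.
have [g hg] : exists g : 'I_#|SH| -> 'I_#|SG|, forall y,
    phi (val (enum_val (g y))) = val (enum_val y).
  by exists (fun y => proj1_sig (constructive_indefinite_description _ (ex_g y)));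
    move=> y; case: constructive_indefinite_description.
have fK : cancel g f.
  move=> y; apply: enum_val_inj; apply: val_inj; by rewrite hf hg.
have gK : cancel f g.
  move=> x; apply: enum_val_inj; apply: val_inj; apply: hinj; rewrite ?ltn_ord //.
  by rewrite hg hf.
have finj : injective f by exact: can_inj gK.
exists f; split; first by exists g.
move=> x y; rewrite !adj_del (inj_eq finj) -!nadjE !hf hadj ?ltn_ord //.
Qed.

Lemma sim_same (G H : graph) : (forall u v, nadj H u v = nadj G u v) -> sim G H.
Proof.
move=> e; apply: (@sim_crit G H (fun x => x)) => //.
by move=> a b; rewrite e => /nadj_bound /andP [ha _]; exists a.
Qed.




Local Open Scope R_scope.

Lemma sumR_le (I : finType) (P : pred I) (F G : I -> R) :
  (forall i, P i -> F i <= G i) ->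
  \big[Rplus/0]_(i | P i) F i <= \big[Rplus/0]_(i | P i) G i.
Proof.
move=> h; apply: (big_ind2 (fun a b => a <= b)) => //; first lra.
move=> *; lra.
Qed.

Lemma sumR_abs (I : finType) (F : I -> R) :
  Rabs (\big[Rplus/0]_i F i) <= \big[Rplus/0]_i Rabs (F i).
Proof.
apply: (big_ind2 (fun a b => Rabs a <= b)) => //.
- by rewrite Rabs_R0; lra.
- move=> a1 a2 b1 b2 h1 h2; eapply Rle_trans; [apply Rabs_triang|lra].
- move=> i _; lra.
Qed.

Lemma sumR_mull (I : finType) (P : pred I) (c : R) (F : I -> R) :
  \big[Rplus/0]_(i | P i) (c * F i) = c * \big[Rplus/0]_(i | P i) F i.
Proof.
apply: (big_ind2 (fun b a => a = c * b)) => //.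
- by rewrite Rmult_0_r.
- by move=> a1 a2 b1 b2 -> ->; rewrite Rmult_plus_distr_l.
Qed.

Lemma sumR_mulr (I : finType) (P : pred I) (c : R) (F : I -> R) :
  \big[Rplus/0]_(i | P i) (F i * c) = (\big[Rplus/0]_(i | P i) F i) * c.
Proof.
rewrite Rmult_comm -sumR_mull; apply: eq_bigr => i _; apply: Rmult_comm.
Qed.

Lemma sumR_const (I : finType) (P : pred I) (x : R) :
  \big[Rplus/0]_(i | P i) x = INR #|P| * x.
Proof.
rewrite big_const; elim: #|P| => [|n IH]; first by rewrite /=; lra.
rewrite S_INR; simpl iter; rewrite IH; lra.
Qed.

Lemma partition_sum (I T : finType) (Y : I -> T) (H : I -> T -> R) :
  \big[Rplus/0]_(a : I) H a (Y a) =
  \big[Rplus/0]_(Z : T) \big[Rplus/0]_(a | Y a == Z) H a Z.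
Proof.
rewrite (partition_big Y predT) //; apply: eq_bigr => Z _.
by apply: eq_bigr => a /eqP <-.
Qed.

Lemma sum_push (I T : finType) (Y : I -> T) (d : I -> R) (G : T -> R) :
  \big[Rplus/0]_(Z : T) ((\big[Rplus/0]_(a | Y a == Z) d a) * G Z) =
  \big[Rplus/0]_(a : I) (d a * G (Y a)).
Proof.
rewrite (@partition_sum I T Y (fun a Z => d a * G Z)); apply: eq_bigr => Z _.
by rewrite sumR_mulr.
Qed.

Definition psdR {T : finType} (M : T -> T -> R) :=
  forall c : T -> R, 0 <= \big[Rplus/0]_(i : T) \big[Rplus/0]_(j : T) (c i * M i j * c j).

Lemma psd_family (T : finType) (M : T -> T -> R) : psdR M ->
  forall (I : finType) (Y : I -> T) (d : I -> R),
  0 <= \big[Rplus/0]_(a : I) \big[Rplus/0]_(b : I) (d a * M (Y a) (Y b) * d b).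
Proof.
move=> hM I Y d.
pose c Z := \big[Rplus/0]_(a | Y a == Z) d a.
suff <- : \big[Rplus/0]_(Z : T) \big[Rplus/0]_(W : T) (c Z * M Z W * c W) =
  \big[Rplus/0]_(a : I) \big[Rplus/0]_(b : I) (d a * M (Y a) (Y b) * d b) by apply: hM.
transitivity (\big[Rplus/0]_(Z : T) \big[Rplus/0]_(b : I) (c Z * M Z (Y b) * d b)).
  apply: eq_bigr => Z _.
  have := @sum_push I T Y d (fun W => c Z * M Z W) => /= e.
  transitivity (\big[Rplus/0]_(a : I) (d a * (c Z * M Z (Y a)))).
    rewrite -e; apply: eq_bigr => W _; rewrite Rmult_comm //.
  by apply: eq_bigr => b _; lra.
rewrite exchange_big [RHS]exchange_big; apply: eq_bigr => b _.
have := @sum_push I T Y d (fun Z => M Z (Y b) * d b) => /= e.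
transitivity (\big[Rplus/0]_(a : I) (d a * (M (Y a) (Y b) * d b))).
  rewrite -e; apply: eq_bigr => Z _; rewrite Rmult_assoc //.
by apply: eq_bigr => a _; lra.
Qed.

Lemma psd_two (T : finType) (M : T -> T -> R) : psdR M ->
  forall X W x w, 0 <= x * M X X * x + x * M X W * w + w * M W X * x + w * M W W * w.
Proof.
move=> hM X W x w.
have := @psd_family T M hM bool (fun b : bool => if b then X else W) (fun b => if b then x else w).
rewrite !big_bool /=; lra.
Qed.


Close Scope R_scope.

Lemma nadj_pad k m (F : flatgraph k) u v :
  nadj (as_graph (pad m F)) u v = [&& u < m, v < m & nadj (as_graph F) u v].
Proof.
rewrite /pad /as_graph (@nadj_from_rel m _ (fun u v => nadj (Graph k F) u v)) //.
rewrite (nadj_sym _ v u) orbb.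
case e: (nadj _ u v); rewrite ?andbF //.
case: (u =P v) e => [->|]; by rewrite ?nadj_irr.
Qed.

Lemma nadj_pad_le k m (F : flatgraph k) u v : k <= m ->
  nadj (as_graph (pad m F)) u v = nadj (as_graph F) u v.
Proof.
move=> km; rewrite nadj_pad; case e: (nadj _ u v); rewrite ?andbF //.
case/andP: (nadj_bound _ _ _ e) => /= hu hv.
by rewrite (leq_trans hu km) (leq_trans hv km).
Qed.

Definition toKL {m} (X : flatgraph m) : klgraph m := exist _ (as_graph X) (leqnn m).

Lemma kprod_flat m (X Y : flatgraph m) :
  sim (kprod (toKL X) (toKL Y)) (as_graph (flat_prod X Y)).
Proof.
apply: sim_same => u v.
rewrite nadj_flat_prod /kprod /=.
rewrite (@nadj_from_rel _ _ (fun u v => nadj (as_graph X) u v ||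
   nadj (as_graph Y) (if u < m then u else if m <= u then u - m + m else m)
                     (if v < m then v else if m <= v then v - m + m else m))) //.
rewrite addnK.
have m2id : forall x, (if x < m then x else if m <= x then x - m + m else m) = x.
  by move=> x; case: ltnP => // h; rewrite subnK.
rewrite !m2id.
case hu: (u < m); last first.
  have hu' : m <= u by rewrite leqNgt hu.
  by rewrite (nadj_outl (as_graph X) u v hu') (nadj_outl (as_graph Y) u v hu') (nadj_outr (as_graph X) v u hu') (nadj_outr (as_graph Y) v u hu') /=; rewrite ?andbF.
case hv: (v < m); last first.
  have hv' : m <= v by rewrite leqNgt hv.
  by rewrite (nadj_outr (as_graph X) u v hv') (nadj_outr (as_graph Y) u v hv') (nadj_outl (as_graph X) v u hv') (nadj_outl (as_graph Y) v u hv') /=; rewrite ?andbF.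
rewrite (nadj_sym _ v u) (nadj_sym _ v u).
case: (u =P v) => [->|ne]; first by rewrite !nadj_irr.
by rewrite orbb.
Qed.

Lemma fwd k (A : flatgraph k -> flatgraph k -> R) :
  (exists f : graph -> R,
     graph_param f /\ isolate_indifferent f /\ reflection_positive f /\
     forall F G : flatgraph k, A F G = f (as_graph (flat_prod F G))) ->
  (forall m : nat, k <= m ->
     exists B : flatgraph m -> flatgraph m -> R,
       psd B /\
       (forall F1 G1 F2 G2 : flatgraph m,
          sim (as_graph (flat_prod F1 G1)) (as_graph (flat_prod F2 G2)) -> B F1 G1 = B F2 G2) /\
       (forall F G : flatgraph k, B (pad m F) (pad m G) = A F G)).
Proof.
move=> [f [gp [ii [rp hA]]]] m km.
exists (fun F G => f (as_graph (flat_prod F G))); split; [|split].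
- split.
  + move=> i j; congr f; congr as_graph; apply: val_inj; by rewrite /= setUC.
  + move=> c.
    have := proj2 (rp m #|{: flatgraph m}| (fun i => toKL (enum_val i))) (fun i => c (enum_val i)).
    rewrite (reindex _ (onW_bij _ (@enum_val_bij (flatgraph m)))) /=.
    move=> h; apply: (Rle_trans _ _ _ h); apply: Req_le.
    apply: eq_bigr => i _.
    rewrite (reindex _ (onW_bij _ (@enum_val_bij (flatgraph m)))) /=.
    apply: eq_bigr => j _.
    by rewrite (ii _ _ (kprod_flat _ _ _)).
- by move=> F1 G1 F2 G2 h; exact: ii _ _ h.
- move=> F G; rewrite hA; apply: ii; apply: sim_same => u v.
  by rewrite !nadj_flat_prod !nadj_pad_le.
Qed.


Lemma nadj_congr (G : graph) x x' y y' :
  eq_junk (gn G) x x' -> eq_junk (gn G) y y' -> nadj G x y = nadj G x' y'.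
Proof.
rewrite /eq_junk => /orP [/eqP ->|/andP [h1 h2]].
  case/orP => [/eqP -> //|/andP [h3 h4]]; by rewrite !nadj_outr.
by move=> _; rewrite !nadj_outl.
Qed.

Definition Xs m p M (G : graph) o : flatgraph m :=
  from_rel (fun x y : 'I_m => nadj G (psi p M o x) (psi p M o y)).

Lemma nadj_Xs m p M G o a b :
  nadj (as_graph (Xs m p M G o)) a b =
  [&& a < m, b < m, a != b & nadj G (psi p M o a) (psi p M o b) || nadj G (psi p M o b) (psi p M o a)].
Proof. by rewrite /Xs /as_graph (@nadj_from_rel m _ (fun a b => nadj G (psi p M o a) (psi p M o b))). Qed.

Lemma nadj_kprod p (F1 F2 : klgraph p) u v :
  nadj (kprod F1 F2) u v =
  [&& u < gn (val F1) + gn (val F2) - p, v < gn (val F1) + gn (val F2) - p, u != v &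
     (nadj (val F1) u v || nadj (val F2) (m2f p (gn (val F1)) (gn (val F2)) u) (m2f p (gn (val F1)) (gn (val F2)) v)) ||
     (nadj (val F1) v u || nadj (val F2) (m2f p (gn (val F1)) (gn (val F2)) v) (m2f p (gn (val F1)) (gn (val F2)) u))].
Proof.
rewrite /kprod.
by rewrite (@nadj_from_rel _ _ (fun u v => nadj (val F1) u v || nadj (val F2) (m2f p (gn (val F1)) (gn (val F2)) u) (m2f p (gn (val F1)) (gn (val F2)) v))).
Qed.

Lemma slot_sim p m M (F1 F2 : klgraph p) so to :
  gn (val F1) <= M -> gn (val F2) <= M ->
  so + M <= to \/ to + M <= so -> p + so + M <= m -> p + to + M <= m ->
  sim (kprod F1 F2) (as_graph (flat_prod (Xs m p M (val F1) so) (Xs m p M (val F2) to))).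
Proof.
set G1 := val F1; set G2 := val F2.
have hp1 : p <= gn G1 := valP F1.
have hp2 : p <= gn G2 := valP F2.
move=> h1M h2M disj hs ht.
apply: (@sim_crit _ _ (phi p (gn G1) so to)).
- move=> u v /= hu hv.
  rewrite nadj_flat_prod !nadj_Xs nadj_kprod -/G1 -/G2 hu hv.
  rewrite !(arA3 _ _ _ _ _ _ _ _ hp1 h1M hp2 h2M) //.
  have -> : (phi p (gn G1) so to u != phi p (gn G1) so to v) = (u != v).
    apply/idP/idP; apply: contra => /eqP e; apply/eqP; first by rewrite e.
    exact: (arA4 _ _ _ _ _ _ _ _ hp1 h1M hp2 h2M disj hu hv e).
  have e1 : forall a b, a < gn G1 + gn G2 - p -> b < gn G1 + gn G2 - p ->
     nadj G1 (psi p M so (phi p (gn G1) so to a)) (psi p M so (phi p (gn G1) so to b)) = nadj G1 a b.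
    move=> a b ha hb; apply: nadj_congr; [exact: (arA1 _ _ _ _ _ _ _ hp1 h1M hp2 h2M disj ha)|exact: (arA1 _ _ _ _ _ _ _ hp1 h1M hp2 h2M disj hb)].
  have e2 : forall a b, a < gn G1 + gn G2 - p -> b < gn G1 + gn G2 - p ->
     nadj G2 (psi p M to (phi p (gn G1) so to a)) (psi p M to (phi p (gn G1) so to b)) =
     nadj G2 (m2f p (gn G1) (gn G2) a) (m2f p (gn G1) (gn G2) b).
    move=> a b ha hb; apply: nadj_congr; [exact: (arA2 _ _ _ _ _ _ _ hp1 h1M hp2 h2M disj ha)|exact: (arA2 _ _ _ _ _ _ _ hp1 h1M hp2 h2M disj hb)].
  rewrite !e1 // !e2 //.
  case: (u != v) => //=.
  by case: (nadj G1 u v); case: (nadj G1 v u); case: (nadj G2 _ _); case: (nadj G2 _ _).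
- move=> u v /= hu hv; exact: (arA4 _ _ _ _ _ _ _ _ hp1 h1M hp2 h2M disj hu hv).
- move=> a b; rewrite nadj_flat_prod !nadj_Xs => /orP [] /and4P [_ _ _ /orP []] h.
  + apply: (arA5 _ _ _ _ _ _ _ hp1 h1M hp2 h2M).
    by case/andP: (nadj_bound _ _ _ h).
  + apply: (arA5 _ _ _ _ _ _ _ hp1 h1M hp2 h2M).
    by case/andP: (nadj_bound _ _ _ h).
  + apply: (arA6 _ _ _ _ _ _ _ hp1 h1M hp2 h2M).
    by case/andP: (nadj_bound _ _ _ h).
  + apply: (arA6 _ _ _ _ _ _ _ hp1 h1M hp2 h2M).
    by case/andP: (nadj_bound _ _ _ h).
Qed.


Definition e0 n : flatgraph n := from_rel (fun _ _ : 'I_n => false).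
Lemma nadj_e0 n u v : nadj (as_graph (e0 n)) u v = false.
Proof.
by rewrite /e0 /as_graph (@nadj_from_rel n _ (fun _ _ => false)) // !andbF.
Qed.

Definition enc (i : nat) : graph :=
  match (unpickle i : option (nat * nat)) with
  | Some (n, r) => Graph n (nth (e0 n) (enum {: flatgraph n}) r)
  | None => Graph 0 (e0 0)
  end.
Definition code (G : graph) : nat :=
  pickle (gn G, index (gE G) (enum {: flatgraph (gn G)})).
Lemma encK G : enc (code G) = G.
Proof. by case: G => n E; rewrite /enc /code pickleK /= nth_index // mem_enum. Qed.

Lemma pad_sim m (G : graph) : gn G <= m ->
  sim G (as_graph (flat_prod (pad m (gE G)) (e0 m))).
Proof.
case: G => n E /= hn; apply: sim_same => u v.
by rewrite nadj_flat_prod nadj_e0 orbF nadj_pad_le.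
Qed.

Arguments pad_sim {m G}.

Lemma eps_eq (x y : R) : (forall eps, 0 < eps -> Rabs (x - y) <= eps)%R -> x = y.
Proof.
move=> h; apply: Rminus_diag_uniq; case: (Req_dec (x - y) 0) => // ne.
have := h (Rabs (x - y) / 2)%R; have := Rabs_pos_lt _ ne; lra.
Qed.

Section Bwd.
Variables (k : nat) (A : flatgraph k -> flatgraph k -> R).
Variable Bm : forall m, flatgraph m -> flatgraph m -> R.
Hypothesis hB : forall m, k <= m ->
       psd (Bm m) /\
       (forall F1 G1 F2 G2 : flatgraph m,
          sim (as_graph (flat_prod F1 G1)) (as_graph (flat_prod F2 G2)) -> Bm m F1 G1 = Bm m F2 G2) /\
       (forall F G : flatgraph k, Bm m (pad m F) (pad m G) = A F G).

Definition CB := A (e0 k) (e0 k).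

Lemma Bsim m X Y X' Y' : k <= m ->
  (forall u v, nadj (as_graph (flat_prod X' Y')) u v = nadj (as_graph (flat_prod X Y)) u v) ->
  Bm m X Y = Bm m X' Y'.
Proof. by move=> km h; apply: (proj1 (proj2 (hB _ km))); apply: sim_same. Qed.

Lemma BXX m X : k <= m -> Bm m X X = Bm m X (e0 m).
Proof. by move=> km; apply: Bsim => // u v; rewrite !nadj_flat_prod nadj_e0 orbF orbb. Qed.

Lemma Be0 m : k <= m -> Bm m (e0 m) (e0 m) = CB.
Proof.
move=> km; rewrite /CB -(proj2 (proj2 (hB _ km))); apply: Bsim => // u v.
by rewrite !nadj_flat_prod !nadj_pad_le // !nadj_e0.
Qed.

Lemma Bbound m X : k <= m -> (0 <= Bm m X (e0 m) <= CB)%R.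
Proof.
move=> km; have [[hs hq] _] := hB _ km.
have h1 := @psd_two _ _ hq X (e0 m) 1 0.
have h2 := @psd_two _ _ hq X (e0 m) 1 (-1).
rewrite (hs (e0 m) X) BXX // Be0 // in h1 h2.
lra.
Qed.

Lemma C_ge0 : (0 <= CB)%R.
Proof. have := @Bbound k (e0 k) (leqnn k); lra. Qed.

Lemma Bbound2 m X Y : k <= m -> (Rabs (Bm m X Y) <= CB)%R.
Proof.
move=> km; rewrite (@Bsim m X Y (flat_prod X Y) (e0 m)) //.
  have := @Bbound m (flat_prod X Y) km => h; rewrite Rabs_pos_eq; lra.
by move=> u v; rewrite !nadj_flat_prod nadj_e0 orbF.
Qed.

Definition v m (G : graph) := if k <= m then Bm m (pad m (gE G)) (e0 m) else 0%R.

Lemma v_bound m G : (0 <= v m G <= CB)%R.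
Proof.
rewrite /v; case: ifP => km; first exact: Bbound.
have := C_ge0; lra.
Qed.

Lemma v_sim m G H : sim G H -> k <= m -> gn G <= m -> gn H <= m -> v m G = v m H.
Proof.
move=> sGH km hG hH; rewrite /v km.
apply: (proj1 (proj2 (hB _ km))).
eapply sim_trans; last exact: (pad_sim hH).
eapply sim_trans; last exact: sGH.
exact: sim_sym (pad_sim hG).
Qed.

Lemma v_A m F G : k <= m -> v m (as_graph (flat_prod F G)) = A F G.
Proof.
move=> km; rewrite /v km -(proj2 (proj2 (hB _ km)) F G); apply: Bsim => // u v.
by rewrite !nadj_flat_prod nadj_e0 orbF !nadj_pad_le //= nadj_flat_prod.
Qed.


Lemma disj_slots (N M : nat) (s t : 'I_N) : s != t -> s * M + M <= t * M \/ t * M + M <= s * M.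
Proof.
move=> ne; case: (ltngtP s t) => h.
- by left; rewrite addnC -mulSn leq_mul2r h orbT.
- by right; rewrite addnC -mulSn leq_mul2r h orbT.
- by move: ne; rewrite (val_inj h) eqxx.
Qed.

Lemma slot_le (N M : nat) (s : 'I_N) : s * M + M <= N * M.
Proof. by rewrite addnC -mulSn leq_mul2r ltn_ord orbT. Qed.

Lemma slot_eq p n (F : 'I_n -> klgraph p) N m :
  let M := p + \max_(i < n) gn (val (F i)) in
  k <= m -> p + N * M + 2 * M <= m -> forall (s t : 'I_N), s != t -> forall i j,
  Bm m (Xs m p M (val (F i)) (s * M)) (Xs m p M (val (F j)) (t * M)) = v m (kprod (F i) (F j)).
Proof.
move=> M km hm s t ne i j.
have hM : forall i, gn (val (F i)) <= M.
  by move=> i'; apply: leq_trans (leq_addl p _); exact: (@leq_bigmax _ (fun i => gn (val (F i))) i').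
have [[hs hq] [hsc _]] := hB _ km.
rewrite /v km; apply: hsc.
have hs' : p + s * M + M <= m.
  move: (@slot_le N M s) (hm); rewrite -addnA; generalize (s * M) (N * M) => a b h1 h2; tlia.
have ht' : p + t * M + M <= m.
  move: (@slot_le N M t) (hm); rewrite -addnA; generalize (t * M) (N * M) => a b h1 h2; tlia.
have hK : gn (kprod (F i) (F j)) <= m.
  apply: leq_trans (leq_subr _ _) _; apply: leq_trans (leq_add (hM i) (hM j)) _.
  move: (hm); generalize (N * M) => b h1; tlia.
eapply sim_trans; last exact: (pad_sim hK).
apply: sim_sym; apply: slot_sim; rewrite ?hM //.
exact: disj_slots.
Qed.

Lemma rp_flat p n (F : 'I_n -> klgraph p) (c : 'I_n -> R) N m :
  let M := p + \max_(i < n) gn (val (F i)) in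
  1 < N -> k <= m -> p + N * M + 2 * M <= m ->
  (0 <= CB * (\big[Rplus/0]_i \big[Rplus/0]_j (Rabs (c i) * Rabs (c j))) +
        (INR N - 1) * \big[Rplus/0]_i \big[Rplus/0]_j (c i * v m (kprod (F i) (F j)) * c j))%R.
Proof.
move=> M hN km hm.
have hM : forall i, gn (val (F i)) <= M.
  by move=> i; apply: leq_trans (leq_addl p _); exact: (@leq_bigmax _ (fun i => gn (val (F i))) i).
pose X := fun (i : 'I_n) (s : 'I_N) => Xs m p M (val (F i)) (s * M).
have [[hs hq] [hsc _]] := hB _ km.
have H0 := @psd_family _ _ hq ('I_n * 'I_N)%type (fun a => X a.1 a.2) (fun a => c a.1).
have pairE : forall G : 'I_n * 'I_N -> R,
    \big[Rplus/0%R]_(a : 'I_n * 'I_N) G a = \big[Rplus/0%R]_i \big[Rplus/0%R]_(s : 'I_N) G (i, s).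
  by move=> G; rewrite pair_bigA; apply: eq_bigr => -[].
pose T (s t : 'I_N) := (\big[Rplus/0]_i \big[Rplus/0]_j (c i * Bm m (X i s) (X j t) * c j))%R.
have eT : (\big[Rplus/0]_(a : 'I_n * 'I_N) \big[Rplus/0]_(b : 'I_n * 'I_N)
    (c a.1 * Bm m (X a.1 a.2) (X b.1 b.2) * c b.1) =
    \big[Rplus/0]_(s : 'I_N) \big[Rplus/0]_(t : 'I_N) T s t)%R.
  rewrite pairE exchange_big; apply: eq_bigr => s _.
  under eq_bigr do rewrite pairE exchange_big.
  rewrite exchange_big; apply: eq_bigr => t _.
  done.
rewrite eT in H0.
set Q := (\big[Rplus/0]_i \big[Rplus/0]_j (c i * v m (kprod (F i) (F j)) * c j))%R.
set S := (\big[Rplus/0]_i \big[Rplus/0]_j (Rabs (c i) * Rabs (c j)))%R.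
have hTst : forall s t : 'I_N, s != t -> T s t = Q.
  move=> s t ne; apply: eq_bigr => i _; apply: eq_bigr => j _.
  congr (_ * _ * _)%R; exact: slot_eq.
have hTss : forall s, (T s s <= CB * S)%R.
  move=> s; rewrite /S -sumR_mull; apply: sumR_le => i _.
  rewrite -sumR_mull; apply: sumR_le => j _.
  have hb := @Bbound2 m (X i s) (X j s) km.
  apply: Rle_trans (Rle_abs _) _.
  rewrite !Rabs_mult.
  have := Rabs_pos (c i); have := Rabs_pos (c j); have := Rabs_pos (Bm m (X i s) (X j s)).
  move=> h1 h2 h3.
  have : (Rabs (c i) * Rabs (Bm m (X i s) (X j s)) <= Rabs (c i) * CB)%R.
    by apply: Rmult_le_compat_l.
  move=> h4.
  have : (Rabs (c i) * Rabs (Bm m (X i s) (X j s)) * Rabs (c j) <= Rabs (c i) * CB * Rabs (c j))%R.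
    by apply: Rmult_le_compat_r.
  lra.
have hrow : forall s, (\big[Rplus/0]_(t : 'I_N) T s t <= CB * S + (INR N - 1) * Q)%R.
  move=> s; rewrite (bigD1 s) //=.
  have e1 : (\big[Rplus/0]_(t : 'I_N | t != s) T s t = \big[Rplus/0]_(t : 'I_N | t != s) Q)%R.
    by apply: eq_bigr => t ne; apply: hTst; rewrite eq_sym.
  have e2 : (\big[Rplus/0]_(t : 'I_N) Q = Q + \big[Rplus/0]_(t : 'I_N | t != s) Q)%R.
    by rewrite (bigD1 s).
  have e3 : (\big[Rplus/0]_(t : 'I_N) Q = INR N * Q)%R.
    by rewrite sumR_const card_ord.
  have := hTss s; rewrite e1; lra.
have hsum : (\big[Rplus/0]_(s : 'I_N) \big[Rplus/0]_(t : 'I_N) T s t <=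
    \big[Rplus/0]_(s : 'I_N) (CB * S + (INR N - 1) * Q))%R.
  by apply: sumR_le => s _; apply: hrow.
rewrite sumR_const card_ord in hsum.
have hN0 : (0 < INR N)%R by apply: lt_0_INR; apply/ltP; apply: ltn_trans hN.
have : (0 <= INR N * (CB * S + (INR N - 1) * Q))%R by lra.
move=> h; apply: (Rmult_le_reg_l (INR N)) => //; lra.
Qed.

End Bwd.


Lemma iso_sim G H : iso G H -> sim G H.
Proof.
move=> [f [[g fg gf] hadj]].
pose phi u := oapp (fun x : 'I_(gn G) => val (f x)) u (insub u).
have phiE : forall x : 'I_(gn G), phi (val x) = val (f x).
  by move=> x; rewrite /phi valK.
apply: (@sim_crit G H phi).
- move=> u v hu hv.
  rewrite -[u]/(val (Ordinal hu)) -[v]/(val (Ordinal hv)) !phiE !nadjE.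
  by rewrite hadj.
- move=> u v hu hv.
  rewrite -[u]/(val (Ordinal hu)) -[v]/(val (Ordinal hv)) !phiE => /val_inj e.
  by have := can_inj fg e => ->.
- move=> a b /nadj_bound /andP [ha _].
  exists (val (g (Ordinal ha))); first exact: ltn_ord.
  by rewrite phiE gf.
Qed.

Lemma term_close x y z w e : (Rabs (y - w) <= e ->
  x * y * z <= x * w * z + e * (Rabs x * Rabs z))%R.
Proof.
move=> h.
have e1 : (x * y * z = x * w * z + x * (y - w) * z)%R by ring.
rewrite e1; apply: Rplus_le_compat_l.
apply: Rle_trans (Rle_abs _) _; rewrite !Rabs_mult.
have := Rabs_pos x; have := Rabs_pos z; have := Rabs_pos (y - w) => h1 h2 h3.
have : (Rabs x * Rabs (y - w) <= Rabs x * e)%R by apply: Rmult_le_compat_l.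
move=> h4.
have : (Rabs x * Rabs (y - w) * Rabs z <= Rabs x * e * Rabs z)%R by apply: Rmult_le_compat_r.
lra.
Qed.

Lemma bwd k (A : flatgraph k -> flatgraph k -> R) :
  (forall m : nat, k <= m ->
     exists B : flatgraph m -> flatgraph m -> R,
       psd B /\
       (forall F1 G1 F2 G2 : flatgraph m,
          sim (as_graph (flat_prod F1 G1)) (as_graph (flat_prod F2 G2)) -> B F1 G1 = B F2 G2) /\
       (forall F G : flatgraph k, B (pad m F) (pad m G) = A F G)) ->
  (exists f : graph -> R,
     graph_param f /\ isolate_indifferent f /\ reflection_positive f /\
     forall F G : flatgraph k, A F G = f (as_graph (flat_prod F G))).
Proof.
move=> H.
have hex : forall m, exists B : flatgraph m -> flatgraph m -> R, k <= m ->
       psd B /\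
       (forall F1 G1 F2 G2 : flatgraph m,
          sim (as_graph (flat_prod F1 G1)) (as_graph (flat_prod F2 G2)) -> B F1 G1 = B F2 G2) /\
       (forall F G : flatgraph k, B (pad m F) (pad m G) = A F G).
  move=> m; case: (boolP (k <= m)) => km.
    by have [B hB] := H m km; exists B.
  by exists (fun _ _ => 0%R).
pose Bm m := proj1_sig (constructive_indefinite_description _ (hex m)).
have hB : forall m, k <= m ->
       psd (Bm m) /\
       (forall F1 G1 F2 G2 : flatgraph m,
          sim (as_graph (flat_prod F1 G1)) (as_graph (flat_prod F2 G2)) -> Bm m F1 G1 = Bm m F2 G2) /\
       (forall F G : flatgraph k, Bm m (pad m F) (pad m G) = A F G).
  move=> m; exact: (proj2_sig (constructive_indefinite_description _ (hex m))).
pose vv m i := v k Bm m (enc i).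
have hvv : forall m i, (0 <= vv m i <= CB k A)%R by move=> m i; exact: (@v_bound k A Bm hB).
have [a ha] := @Bis.approx_exists vv (CB k A) hvv.
pose f G := a (code G).
have hap : forall L N eps, (0 < eps)%R -> exists m, N <= m /\
    forall G, code G <= L -> (Rabs (v k Bm m G - f G) <= eps)%R.
  move=> L N eps heps; have [m [hm hm']] := ha L N eps heps.
  exists m; split; first by apply/leP.
  move=> G hG; have := hm' (code G) (elimT leP hG).
  by rewrite /vv encK.
have hclose : forall G G' m0, (forall m, m0 <= m -> v k Bm m G = v k Bm m G') -> f G = f G'.
  move=> G G' m0 hv; apply: eps_eq => eps heps.
  have [m [hm hm']] := hap (maxn (code G) (code G')) m0 (eps / 2)%R ltac:(lra).
  have h1 := hm' G (leq_maxl _ _).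
  have h2 := hm' G' (leq_maxr _ _).
  rewrite (hv m hm) in h1.
  move: h1 h2; rewrite /Rabs; do 3 case: Rcase_abs => ? //; lra.
have hii : isolate_indifferent f.
  move=> G G' sGG'; apply: eps_eq => eps heps.
  have [m [hm hm']] := hap (maxn (code G) (code G')) (maxn k (maxn (gn G) (gn G'))) (eps / 2)%R
    ltac:(lra).
  have e := @v_sim k A Bm hB _ _ _ sGG' (leq_trans (leq_maxl _ _) hm)
    (leq_trans (leq_trans (leq_maxl _ _) (leq_maxr _ _)) hm)
    (leq_trans (leq_trans (leq_maxr _ _) (leq_maxr _ _)) hm).
  have h1 := hm' G (leq_maxl _ _).
  have h2 := hm' G' (leq_maxr _ _).
  rewrite e in h1.
  move: h1 h2; rewrite /Rabs; do 3 case: Rcase_abs => ? //; lra.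
exists f; split; [|split; [exact: hii|split]].
- by move=> G G' /iso_sim; exact: hii.
- move=> p n F.
  pose M := p + \max_(i < n) gn (val (F i)).
  split.
  + move=> i j; apply: (hclose _ _ (maxn k (p + 2 * M + 2 * M))) => m hm.
    have km : k <= m by apply: leq_trans (leq_maxl _ _) hm.
    have hm2 : p + 2 * M + 2 * M <= m by apply: leq_trans (leq_maxr _ _) hm.
    have [[hs _] _] := hB _ km.
    rewrite -(@slot_eq k A Bm hB p n F 2 m km hm2 (Ordinal (isT : 0 < 2)) (Ordinal (isT : 1 < 2)) isT i j).
    rewrite -(@slot_eq k A Bm hB p n F 2 m km hm2 (Ordinal (isT : 1 < 2)) (Ordinal (isT : 0 < 2)) isT j i).
    exact: hs.
  + move=> c.
    set S := (\big[Rplus/0]_i \big[Rplus/0]_j (Rabs (c i) * Rabs (c j)))%R.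
    have hS : (0 <= S)%R.
      rewrite /S; apply: (big_ind (fun x => 0 <= x)%R) => [|x y hx hy|i _]; try lra.
      apply: (big_ind (fun x => 0 <= x)%R) => [|x y hx hy|j _]; try lra.
      apply: Rmult_le_pos; exact: Rabs_pos.
    have hC := @C_ge0 k A Bm hB.
    apply: Rnot_lt_le.
    set Qf := (\big[Rplus/0]_i _)%R.
    move=> hneg.
    pose eta := (- Qf / 2)%R.
    have heta : (0 < eta)%R by rewrite /eta; lra.
    have [N0 [hN0 N0pos]] := archimed_cor1 (eta / (2 * (CB k A * S + 1)))%R
       ltac:(apply: Rdiv_lt_0_compat; nra).
    pose N := N0.+1.
    pose eps := (eta / (2 * (S + 1)))%R.
    have heps : (0 < eps)%R by apply: Rdiv_lt_0_compat; lra.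
    pose L := \max_(i < n) \max_(j < n) code (kprod (F i) (F j)).
    have [m [hm hm']] := hap L (maxn k (p + N * M + 2 * M)) eps heps.
    have km : k <= m by apply: leq_trans (leq_maxl _ _) hm.
    have hm2 : p + N * M + 2 * M <= m by apply: leq_trans (leq_maxr _ _) hm.
    have hN : 1 < N by rewrite /N ltnS; apply/ltP.
    have hrp := @rp_flat k A Bm hB p n F c N m hN km hm2.
    set Qv := (\big[Rplus/0]_i \big[Rplus/0]_j (c i * v k Bm m (kprod (F i) (F j)) * c j))%R in hrp.
    have hL : forall i j, code (kprod (F i) (F j)) <= L.
      move=> i j; apply: leq_trans (@leq_bigmax _ (fun j => code (kprod (F i) (F j))) j) _.
      exact: (@leq_bigmax _ (fun i => \max_(j < n) code (kprod (F i) (F j))) i).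
    have hQ : (Qv <= Qf + eps * S)%R.
      have e1 : (\big[Rplus/0]_i \big[Rplus/0]_j (c i * f (kprod (F i) (F j)) * c j +
                   eps * (Rabs (c i) * Rabs (c j))) = Qf + eps * S)%R.
        rewrite /Qf /S -sumR_mull -big_split; apply: eq_bigr => i _.
        by rewrite -sumR_mull -big_split.
      rewrite -e1; apply: sumR_le => i _; apply: sumR_le => j _.
      apply: term_close; exact: hm' _ (hL i j).
    rewrite /N S_INR in hrp.
    have eN : (INR N0 + 1 - 1 = INR N0)%R by ring.
    rewrite eN -/S in hrp.
    have hN0' : (0 < INR N0)%R by apply: lt_0_INR.
    have hinv : (INR N0 * / INR N0 = 1)%R by field; lra.
    have hipos : (0 < / INR N0)%R by apply: Rinv_0_lt_compat.
    have a1 : (2 * (CB k A * S + 1) * / INR N0 < eta)%R.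
      have h2 : (0 < 2 * (CB k A * S + 1))%R by nra.
      have := Rmult_lt_compat_l _ _ _ h2 hN0.
      have -> : (2 * (CB k A * S + 1) * (eta / (2 * (CB k A * S + 1))) = eta)%R by field; lra.
      lra.
    have a2 : (- (CB k A * S) * / INR N0 <= Qv)%R.
      have : (0 <= INR N0 * (CB k A * S * / INR N0 + Qv))%R.
        have -> : (INR N0 * (CB k A * S * / INR N0 + Qv) = CB k A * S * (INR N0 * / INR N0) + INR N0 * Qv)%R by ring.
        rewrite hinv; lra.
      move=> h; have h' : forall r, (0 <= INR N0 * r)%R -> (0 <= r)%R by move=> r hr; apply: (Rmult_le_reg_l (INR N0)); lra.
      have := h' _ h; lra.
    have a3 : (eps * S < eta / 2)%R.
      rewrite /eps.
      have -> : (eta / (2 * (S + 1)) * S = (eta / 2) * (S / (S + 1)))%R by field; lra.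
      have : (S / (S + 1) < 1)%R by apply: (Rmult_lt_reg_r (S + 1)); [lra|]; field_simplify; lra.
      move=> h; nra.
    have a4 : (CB k A * S * / INR N0 <= (CB k A * S + 1) * / INR N0)%R.
      by apply: Rmult_le_compat_r; lra.
    rewrite /eta in a1 a3; lra.
- move=> F G; symmetry; apply: eps_eq => eps heps.
  have [m [hm hm']] := hap (code (as_graph (flat_prod F G))) k eps heps.
  have := hm' _ (leqnn _); rewrite (@v_A k A Bm hB) //.
  by rewrite Rabs_minus_sym.
Qed.

Theorem mainTheorem9 (k : nat) (A : flatgraph k -> flatgraph k -> R)
  (Asym : forall F G, A F G = A G F) :
  (exists f : graph -> R,
     graph_param f /\ isolate_indifferent f /\ reflection_positive f /\
     forall F G : flatgraph k, A F G = f (as_graph (flat_prod F G)))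
  <->
  (forall m : nat, k <= m ->
     exists B : flatgraph m -> flatgraph m -> R,
       psd B /\
       (forall F1 G1 F2 G2 : flatgraph m,
          sim (as_graph (flat_prod F1 G1)) (as_graph (flat_prod F2 G2)) -> B F1 G1 = B F2 G2) /\
       (forall F G : flatgraph k, B (pad m F) (pad m G) = A F G)).
Proof.
split; [exact: fwd|exact: bwd].
Qed.
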